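(* If $n\ge 1$ and $k\ge 2$ are integers, then the radius of the $k$-Pell graph $\Pi_{n,k}$ is $$\operatorname{rad}(\Pi_{n,k})=\left\lfloor \frac{kn}{2}\right\rfloor.$$
   Context: For an integer $k\ge 2$, a $k$-Pell string is a finite word over the alphabet $\{0,1,\ldots,k-1,kk\}$, i.e. a word over $\{0,1,\ldots,k\}$ in which every maximal run of the letter $k$ has even length. For $n\ge 0$, the $k$-Pell graph $\Pi_{n,k}$ has as vertices all $k$-Pell strings of length $n$, and two vertices are adjacent if one is obtained from the other either by replacing a single letter $i$ by $i+1$ (or vice versa) for some $i\in\{0,1,\ldots,k-2\}$, or by replacing one factor $(k-1)(k-1)$ by $kk$ (or vice versa), in such a way that the resulting string is again a $k$-Pell string. The radius is the minimum eccentricity of a vertex with respect to the shortest-path distance. *)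

(* Defs.v *)
From mathcomp Require Import all_boot.
Set Implicit Arguments. Unset Strict Implicit. Unset Printing Implicit Defensive.

(* k-Pell strings: words over the alphabet {0,...,k-1, kk}, i.e. words over
   {0,...,k} parsed letter by letter where the letter k must come as the
   two-letter block kk. *)
Fixpoint pellb (k : nat) (s : seq nat) : bool :=
  match s with
  | [::] => true
  | x :: s' =>
      if x == k then
        (match s' with
         | y :: s'' => (y == k) && pellb k s''
         | [::] => false
         end)
      else pellb k s'
  end.

Definition pell_vertex (n k : nat) : finType :=
  {t : n.-tuple 'I_k.+1 | pellb k (map val t)}.

Definition letter n k (u : pell_vertex n k) (i : nat) : nat :=
  nth 0 (map val (val u)) i.

Definition adj_step n k (u v : pell_vertex n k) : bool :=
  [exists i : 'I_n,
    [forall j : 'I_n, (j != i) ==> (letter u j == letter v j)] &&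
    [&& letter u i < k, letter v i < k &
        (letter u i == (letter v i).+1) || (letter v i == (letter u i).+1)]].

Definition adj_block n k (u v : pell_vertex n k) : bool :=
  [exists i : 'I_n,
    [&& i.+1 < n,
        [forall j : 'I_n, ((j != i) && (val j != i.+1)) ==> (letter u j == letter v j)] &
        ([&& letter u i == k.-1, letter u i.+1 == k.-1,
             letter v i == k & letter v i.+1 == k] ||
         [&& letter v i == k.-1, letter v i.+1 == k.-1,
             letter u i == k & letter u i.+1 == k])]].

Definition pell_adj n k : rel (pell_vertex n k) :=
  fun u v => adj_step u v || adj_block u v.

Definition walk_of_len n k (u v : pell_vertex n k) (m : nat) : bool :=
  [exists p : m.-tuple (pell_vertex n k), path (@pell_adj n k) u p && (last u p == v)].

(* shortest-path distance: least m with a walk of length m; a shortest walk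
   has fewer than #|V| edges, so searching m < #|V| suffices.  (If v is
   unreachable the value is #|V|; Pell graphs are connected, so this
   convention is never used.) *)
Definition pell_dist n k (u v : pell_vertex n k) : nat :=
  find (walk_of_len u v) (iota 0 #|pell_vertex n k|).

Definition pell_ecc n k (u : pell_vertex n k) : nat :=
  \max_(v : pell_vertex n k) pell_dist u v.

(* radius = minimum eccentricity (eccentricities are <= #|V|, and V is nonempty) *)
Definition pell_radius n k : nat :=
  \big[minn/#|pell_vertex n k|]_(u : pell_vertex n k) pell_ecc u.

(* Main.v *)
Require Import Defs.
From mathcomp Require Import all_boot.
From mathcomp Require Import zify.
Set Implicit Arguments. Unset Strict Implicit. Unset Printing Implicit Defensive.

Definition lu n k (u : pell_vertex n k) : seq nat := map val (val u).

Lemma size_lu n k (u : pell_vertex n k) : size (lu u) = n.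
Proof. by rewrite /lu size_map size_tuple. Qed.

Lemma all_lu n k (u : pell_vertex n k) : all (fun x => x <= k) (lu u).
Proof. apply/allP => x /mapP [y _ ->]. rewrite -ltnS. exact: ltn_ord. Qed.

Lemma pellb_lu n k (u : pell_vertex n k) : pellb k (lu u).
Proof. exact: (valP u). Qed.

Lemma lu_inj n k : injective (@lu n k).
Proof. move=> u v /(inj_map val_inj) H; apply: val_inj; exact: val_inj. Qed.

Lemma letterE n k (u : pell_vertex n k) i : letter u i = nth 0 (lu u) i.
Proof. by []. Qed.

Lemma mkv n k s : size s = n -> all (fun x => x <= k) s -> pellb k s ->
  exists v : pell_vertex n k, lu v = s.
Proof.
move=> Hs Ha Hp.
have Em : map val (map (@inord k) s) = s.
  rewrite -map_comp; rewrite -[RHS]map_id; apply/eq_in_map => x Hx /=.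
  by rewrite inordK // ltnS; move/allP: Ha; apply.
have Hsz : size (map (@inord k) s) == n by rewrite size_map Hs.
have Hp' : pellb k (map val (Tuple Hsz)) by rewrite /= Em.
by exists (exist _ (Tuple Hsz) Hp'); rewrite /lu /= Em.
Qed.

Lemma pellb_cat k p s : pellb k p -> pellb k (p ++ s) = pellb k s.
Proof.
elim: (size p).+1 {-2}p (ltnSn (size p)) => // N IH [|x p'] //= Hsz.
case: eqP => Hx.
  case: p' Hsz => [|y p''] //= Hsz /andP [Hy Hp]; rewrite Hy /=.
  by apply: IH => //; move: Hsz => /=; lia.
by move=> Hp; apply: IH => //; move: Hsz => /=; lia.
Qed.

Lemma pellb_nseq k r x : x != k -> pellb k (nseq r x).
Proof. by move=> Hx; elim: r => //= r ->; rewrite (negbTE Hx) /=; case: r. Qed.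

Lemma pellb_cons k x s : x != k -> pellb k (x :: s) = pellb k s.
Proof. by move=> Hx /=; rewrite (negbTE Hx). Qed.

Definition term k (x y : nat) : nat :=
  2 * ((minn x k.-1 - minn y k.-1) + (minn y k.-1 - minn x k.-1)) + ((x == k) != (y == k)).

Lemma term_tri k x y z : term k x z <= term k x y + term k y z.
Proof.
rewrite /term; case: (x =P k); case: (y =P k); case: (z =P k) => /= *; lia.
Qed.

Lemma term0 k x : term k x x = 0.
Proof. rewrite /term; case: eqP => /= *; lia. Qed.

Definition RV n k (u v : pell_vertex n k) : nat :=
  \sum_(i < n) term k (letter u i) (letter v i).

Lemma RV_tri n k (u v w : pell_vertex n k) : RV u w <= RV u v + RV v w.
Proof. rewrite /RV -big_split /=; apply: leq_sum => i _; exact: term_tri. Qed.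

Lemma RV0 n k (u : pell_vertex n k) : RV u u = 0.
Proof. by rewrite /RV big1 // => i _; rewrite term0. Qed.

Lemma RV_adj n k (u v : pell_vertex n k) : 1 <= k -> pell_adj u v -> RV u v <= 2.
Proof.
move=> Hk /orP [/existsP [i /andP [/forallP Heq /and3P [Hu Hv Hd]]] |
                /existsP [i /and3P [Hi /forallP Heq Hb]]].
  rewrite /RV (bigD1 i) //= big1 => [|j Hj]; last first.
    by move/implyP: (Heq j) => /(_ Hj) /eqP ->; rewrite term0.
  rewrite /term; move: Hd Hu Hv; case: eqP; case: eqP; move=> /= *; lia.
pose i' : 'I_n := Ordinal Hi.
have Hii : i' != i by rewrite -val_eqE /= ; lia.
rewrite /RV (bigD1 i) //= (bigD1 i') //= big1 => [|j /andP [Hj1 Hj2]]; last first.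
  have Hj3 : val j != i.+1 by move: Hj2; rewrite -val_eqE.
  by move/implyP: (Heq j) => /(_ (introT andP (conj Hj1 Hj3))) /eqP ->; rewrite term0.
rewrite /term /=.
case/orP: Hb => /and4P [/eqP -> /eqP -> /eqP -> /eqP ->];
 rewrite eqxx; case: eqP => /= *; lia.
Qed.

Lemma RV_path n k (o x : pell_vertex n k) (p : seq (pell_vertex n k)) : 1 <= k ->
  path (@pell_adj n k) x p -> RV o (last x p) <= RV o x + 2 * size p.
Proof.
move=> Hk; elim: p x => [|y p IH] x /=; first by lia.
move=> /andP [Ha Hp]; have := IH y Hp; have := RV_adj Hk Ha; have := RV_tri o x y.
move=> h1 h2 h3; apply: (leq_trans h3); rewrite mulnS addnA leq_add2r; apply: (leq_trans h1); by rewrite leq_add2l.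
Qed.

Lemma RV_walk n k (u v : pell_vertex n k) m : 1 <= k -> walk_of_len u v m -> RV u v <= 2 * m.
Proof.
move=> Hk /existsP [p /andP [Hp /eqP Hl]].
have := RV_path u Hk Hp; rewrite Hl RV0 size_tuple; lia.
Qed.

Lemma walk0 n k (u : pell_vertex n k) : walk_of_len u u 0.
Proof. by rewrite /walk_of_len; apply/existsP; exists [tuple]; rewrite /= eqxx. Qed.

Lemma walk1 n k (u v : pell_vertex n k) : pell_adj u v -> walk_of_len u v 1.
Proof. by move=> H; rewrite /walk_of_len; apply/existsP; exists [tuple v]; rewrite /= H eqxx. Qed.

Lemma walk_cat n k (u v w : pell_vertex n k) m1 m2 :
  walk_of_len u v m1 -> walk_of_len v w m2 -> walk_of_len u w (m1 + m2).
Proof.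
move=> /existsP [p1 /andP [H1 /eqP L1]] /existsP [p2 /andP [H2 /eqP L2]].
rewrite /walk_of_len; apply/existsP; exists (cat_tuple p1 p2) => /=.
by rewrite cat_path last_cat L1 H1 H2 L2 eqxx.
Qed.

Definition Reach n k (a b : seq nat) (m : nat) :=
  forall u v : pell_vertex n k, lu u = a -> lu v = b ->
  exists2 m', m' <= m & walk_of_len u v m'.

Definition okv n k (s : seq nat) := [&& size s == n, all (fun x => x <= k) s & pellb k s].

Lemma Reach_refl n k a : Reach n k a a 0.
Proof. move=> u v Hu Hv; have -> : u = v by apply: lu_inj; rewrite Hu Hv. by exists 0 => //; exact: walk0. Qed.

Lemma Reach_mono n k a b m m' : m <= m' -> Reach n k a b m -> Reach n k a b m'.
Proof. move=> Hm H u v Hu Hv; case: (H u v Hu Hv) => x Hx W; exists x => //; lia. Qed.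

Lemma Reach_trans n k a b c m1 m2 : okv n k b ->
  Reach n k a b m1 -> Reach n k b c m2 -> Reach n k a c (m1 + m2).
Proof.
move=> /and3P [/eqP Hs Ha Hp] R1 R2 u v Hu Hv.
case: (mkv Hs Ha Hp) => w Hw.
case: (R1 u w Hu Hw) => x1 Hx1 W1; case: (R2 w v Hw Hv) => x2 Hx2 W2.
exists (x1 + x2); [lia | exact: walk_cat W1 W2].
Qed.

Lemma Reach_adj n k a b : (forall u v : pell_vertex n k, lu u = a -> lu v = b -> pell_adj u v) ->
  Reach n k a b 1.
Proof. by move=> H u v Hu Hv; exists 1 => //; apply: walk1; apply: H. Qed.

Lemma nth_mid (p q : seq nat) x y j : j != size p ->
  nth 0 (p ++ x :: q) j = nth 0 (p ++ y :: q) j.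
Proof.
move=> Hj; rewrite !nth_cat; case: ltnP => // Hl.
have -> : j - size p = (j - size p).-1.+1 by lia.
by [].
Qed.

Lemma nth_mid2 (p q : seq nat) x y x' y' j : j != size p -> j != (size p).+1 ->
  nth 0 (p ++ x :: x' :: q) j = nth 0 (p ++ y :: y' :: q) j.
Proof.
move=> Hj Hj'; rewrite !nth_cat; case: ltnP => // Hl.
have -> : j - size p = (j - size p).-2.+2 by lia.
by [].
Qed.

Lemma nth_at (p q : seq nat) x : nth 0 (p ++ x :: q) (size p) = x.
Proof. by rewrite nth_cat ltnn subnn. Qed.

Lemma nth_at2 (p q : seq nat) x y : nth 0 (p ++ x :: y :: q) (size p).+1 = y.
Proof. by rewrite nth_cat ltnNge leqnSn /= subSnn. Qed.

Lemma Reach_step n k p q x y : x < k -> y < k -> (x == y.+1) || (y == x.+1) ->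
  Reach n k (p ++ x :: q) (p ++ y :: q) 1.
Proof.
move=> Hx Hy Hd; apply: Reach_adj => u v Hu Hv.
have Hi : size p < n by rewrite -(size_lu u) Hu size_cat /=; lia.
apply/orP; left; apply/existsP; exists (Ordinal Hi); apply/andP; split.
  apply/forallP => j; apply/implyP => Hj; rewrite !letterE Hu Hv; apply/eqP; apply: nth_mid.
  by move: Hj; rewrite -val_eqE.
by rewrite !letterE Hu Hv /= !nth_at Hx Hy.
Qed.

Lemma Reach_block n k p q : 1 <= k ->
  Reach n k (p ++ k.-1 :: k.-1 :: q) (p ++ k :: k :: q) 1.
Proof.
move=> Hk; apply: Reach_adj => u v Hu Hv.
have Hi : (size p).+1 < n by rewrite -(size_lu u) Hu size_cat /=; lia.
have Hi' : size p < n by lia.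
apply/orP; right; apply/existsP; exists (Ordinal Hi'); apply/and3P; split => //.
  apply/forallP => j; apply/implyP => /andP [Hj Hj']; rewrite !letterE Hu Hv /=.
  apply/eqP; apply: nth_mid2 => //; move: Hj; by rewrite -val_eqE.
by rewrite !letterE Hu Hv /= !nth_at !nth_at2 !eqxx.
Qed.

Lemma okv_mid n k p z s : pellb k p -> pellb k s -> all (fun x => x <= k) p ->
  all (fun x => x <= k) s -> size p + (size s).+1 = n -> z < k -> okv n k (p ++ z :: s).
Proof.
move=> Pp Ps Ap As Hs Hz; apply/and3P; split.
- by rewrite size_cat /= Hs.
- by rewrite all_cat Ap /= As (ltnW Hz).
- by rewrite pellb_cat // pellb_cons // neq_ltn Hz.
Qed.

Lemma move_up n k p s y d : pellb k p -> pellb k s -> all (fun x => x <= k) p ->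
  all (fun x => x <= k) s -> size p + (size s).+1 = n -> y + d < k ->
  Reach n k (p ++ y :: s) (p ++ (y + d) :: s) d.
Proof.
move=> Pp Ps Ap As Hs; elim: d => [|d IH] Hd; first by rewrite addn0; exact: Reach_refl.
rewrite -addn1; apply: (@Reach_trans _ _ _ (p ++ (y + d) :: s)).
- by apply: okv_mid => //; lia.
- by apply: IH; lia.
- rewrite addn1 addnS; apply: Reach_step; rewrite ?eqxx ?orbT //; lia.
Qed.

Lemma move_down n k p s y d : pellb k p -> pellb k s -> all (fun x => x <= k) p ->
  all (fun x => x <= k) s -> size p + (size s).+1 = n -> y + d < k ->
  Reach n k (p ++ (y + d) :: s) (p ++ y :: s) d.
Proof.
move=> Pp Ps Ap As Hs; elim: d => [|d IH] Hd; first by rewrite addn0; exact: Reach_refl.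
rewrite -add1n; apply: (@Reach_trans _ _ _ (p ++ (y + d) :: s)).
- by apply: okv_mid => //; lia.
- rewrite addnS; apply: Reach_step; rewrite ?eqxx //; lia.
- by apply: IH; lia.
Qed.

Lemma move_gen n k p s y z : pellb k p -> pellb k s -> all (fun x => x <= k) p ->
  all (fun x => x <= k) s -> size p + (size s).+1 = n -> y < k -> z < k ->
  Reach n k (p ++ y :: s) (p ++ z :: s) ((y - z) + (z - y)).
Proof.
move=> Pp Ps Ap As Hs Hy Hz; case: (leqP y z) => Hyz.
  have := @move_up n k p s y (z - y) Pp Ps Ap As Hs ltac:(lia).
  have -> : y + (z - y) = z by lia.
  apply: Reach_mono; lia.
have := @move_down n k p s z (y - z) Pp Ps Ap As Hs ltac:(lia).
have -> : z + (y - z) = y by lia.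
apply: Reach_mono; lia.
Qed.

Lemma all_nseq_le k r x : x <= k -> all (fun y => y <= k) (nseq r x).
Proof. by move=> Hx; elim: r => //= r ->; rewrite Hx. Qed.

Lemma up_main n k N : 2 <= k -> forall p q, size q <= N -> pellb k p -> pellb k q ->
  all (fun x => x <= k) p -> all (fun x => x <= k) q -> size p + size q = n ->
  exists2 c, 2 * c <= k * size q & Reach n k (p ++ nseq (size q) k./2) (p ++ q) c.
Proof.
move=> Hk; elim: N => [|N IH] p q Hq Pp Pq Ap Aq Hs.
  case: q Hq {Pq Aq Hs} => // _; exists 0 => //; exact: Reach_refl.
case: q Hq Pq Aq Hs => [|x q] Hq Pq Aq Hs.
  exists 0 => //; exact: Reach_refl.
have Hm : k./2 != k by apply/negP => /eqP; lia.
have Hmk : k./2 < k by lia.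
have Pn : forall r, pellb k (nseq r k./2) by move=> r; exact: pellb_nseq.
have An : forall r, all (fun y => y <= k) (nseq r k./2) by move=> r; apply: all_nseq_le; lia.
move: Aq => /= /andP [Hxk Aq].
case: (x =P k) => Hx.
-
  subst x; case: q Hq Pq Aq Hs => [|y q] Hq; first by rewrite /= eqxx.
  rewrite /= eqxx /= => /andP [/eqP Hy Pq] /andP [_ Aq] Hs; subst y.
  have [c2 Hc2 R2] := IH (p ++ [:: k; k]) q ltac:(simpl in Hq; lia)
     ltac:(by rewrite pellb_cat //= eqxx) Pq ltac:(by rewrite all_cat Ap /= Hxk) Aq
     ltac:(rewrite size_cat /=; simpl in Hs; lia).
  exists ((k.-1 - k./2) + (k.-1 - k./2) + 1 + c2); first by rewrite /=; lia.
  rewrite -!catA /= in R2.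
  rewrite /=.
  apply: (@Reach_trans _ _ _ (p ++ k :: k :: nseq (size q) k./2)).
    apply/and3P; split.
    - by rewrite size_cat /= size_nseq; simpl in Hs; lia.
    - by rewrite all_cat Ap /= Hxk An.
    - by rewrite pellb_cat // /= eqxx /= Pn.
  2: exact: R2.
  apply: (@Reach_trans _ _ _ (p ++ k.-1 :: k.-1 :: nseq (size q) k./2)).
    apply/and3P; split.
    - by rewrite size_cat /= size_nseq; simpl in Hs; lia.
    - by rewrite all_cat Ap /= An !leq_pred.
    - by rewrite pellb_cat // !pellb_cons //; apply/negP => /eqP; lia.
  2: by apply: Reach_block; lia.
  apply: (@Reach_trans _ _ _ (p ++ k.-1 :: k./2 :: nseq (size q) k./2)).
    apply/and3P; split.
    - by rewrite size_cat /= size_nseq; simpl in Hs; lia.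
    - by rewrite all_cat Ap /= An leq_pred; lia.
    - by rewrite pellb_cat // !pellb_cons //; apply/negP => /eqP; lia.
  + have := @move_gen n k p (k./2 :: nseq (size q) k./2) k./2 k.-1 Pp
       ltac:(by rewrite pellb_cons) Ap ltac:(by rewrite /= An; lia)
       ltac:(rewrite /= size_nseq; simpl in Hs; lia) Hmk ltac:(lia).
    apply: Reach_mono; lia.
  + have := @move_gen n k (p ++ [:: k.-1]) (nseq (size q) k./2) k./2 k.-1
       ltac:(rewrite pellb_cat // pellb_cons //; apply/negP => /eqP; lia)
       (Pn _) ltac:(by rewrite all_cat Ap /= leq_pred) (An _)
       ltac:(rewrite size_cat /= size_nseq; simpl in Hs; lia) Hmk ltac:(lia).
    rewrite -!catA /=; apply: Reach_mono; lia.
-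
  have Hxk' : x < k by lia.
  move: Pq; rewrite pellb_cons; last by apply/eqP.
  move=> Pq.
  have [c2 Hc2 R2] := IH (p ++ [:: x]) q ltac:(simpl in Hq; lia)
     ltac:(by rewrite pellb_cat // pellb_cons //; apply/eqP) Pq
     ltac:(by rewrite all_cat Ap /= Hxk) Aq
     ltac:(rewrite size_cat /=; simpl in Hs; lia).
  rewrite -!catA /= in R2.
  exists ((k./2 - x) + (x - k./2) + c2); first by rewrite /=; lia.
  rewrite /=.
  apply: (@Reach_trans _ _ _ (p ++ x :: nseq (size q) k./2)).
    apply: okv_mid => //; rewrite ?size_nseq; simpl in Hs; lia.
  2: exact: R2.
  apply: move_gen => //; rewrite ?size_nseq; simpl in Hs; lia.
Qed.

Definition lowb k x := 2 * minn x k.-1 < k.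

Fixpoint anti k (s : seq nat) : seq nat :=
  match s with
  | [::] => [::]
  | x :: t => match t with
     | [::] => [:: if lowb k x then k.-1 else 0]
     | y :: s' => if lowb k x then
                    (if lowb k y then k :: k :: anti k s' else k.-1 :: 0 :: anti k s')
                  else 0 :: anti k t
     end
  end.

Fixpoint Rs k (a b : seq nat) : nat :=
  match a, b with
  | x :: a', y :: b' => term k x y + Rs k a' b'
  | _, _ => 0
  end.

Lemma sum_Rs k a b n : size a = n -> size b = n ->
  \sum_(i < n) term k (nth 0 a i) (nth 0 b i) = Rs k a b.
Proof.
elim: a b n => [|x a IH] [|y b] [|n] //=; first by rewrite big_ord0.
move=> [Ha] [Hb]; rewrite big_ord_recl /=; congr (_ + _).
exact: IH.
Qed.

Lemma anti_props k N : 2 <= k -> forall s, size s <= N ->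
  [/\ size (anti k s) = size s, all (fun x => x <= k) (anti k s), pellb k (anti k s)
    & all (fun x => x <= k) s -> k * size s <= Rs k s (anti k s) + 1].
Proof.
move=> Hk; elim: N => [|N IH] s Hs.
  case: s Hs => //= _; split => // _; lia.
case: s Hs => [|x [|y s]] /= Hs.
- split => // _; lia.
- split.
  + by [].
  + by case: ifP => _ /=; lia.
  + by case: (lowb k x) => /=; case: eqP => //; lia.
  + rewrite /term /lowb; case: ifP; case: eqP => /= *; lia.
- have [S1 A1 P1 B1] := IH s ltac:(lia).
  have [S2 A2 P2 B2] := IH (y :: s) ltac:(simpl; lia).
  have Hk1 : k.-1 != k by apply/negP => /eqP; lia.
  have Hk0 : 0 != k by apply/negP => /eqP; lia.
  case Lx: (lowb k x); [case Ly: (lowb k y)|].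
  + split => /=; first by rewrite S1.
    * by rewrite leqnn A1.
    * by rewrite eqxx.
    * move=> /and3P [Hx Hy As]; have := B1 As.
      move: Lx Ly; rewrite /term /lowb; case: eqP; case: eqP => /= *; lia.
  + split => /=; first by rewrite S1.
    * by rewrite leq_pred A1.
    * by rewrite (negbTE Hk1); case: eqP => //; lia.
    * move=> /and3P [Hx Hy As]; have := B1 As.
      move: Lx Ly; rewrite /term /lowb; case: eqP; case: eqP => /= *; lia.
  + split => /=; first by move: S2 => /= ->.
    * by rewrite A2.
    * by case: eqP => //; lia.
    * move=> /andP [Hx As]; have := B2 As; move: S2 => /= S2.
      move: Lx; rewrite /term /lowb; case: eqP => /= *; lia.
Qed.

Lemma pellb_lt k s : all (fun x => x < k) s -> pellb k s.
Proof.
elim: s => //= x s IH /andP [Hx Hs]; rewrite ifN ?IH //; by rewrite neq_ltn Hx.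
Qed.

Lemma pellb_emb n k (t : n.-tuple 'I_k) :
  pellb k (map val (map_tuple (widen_ord (leqnSn k)) t)).
Proof.
apply: pellb_lt; rewrite /= -map_comp; apply/allP => x /mapP [y _ ->] /=; exact: ltn_ord.
Qed.

Definition emb n k (t : n.-tuple 'I_k) : pell_vertex n k :=
  exist _ (map_tuple (widen_ord (leqnSn k)) t) (pellb_emb t).

Lemma emb_inj n k : injective (@emb n k).
Proof.
move=> a b /(congr1 val) /= /(congr1 val) /=; move/inj_map => H; apply: val_inj; apply: H.
by move=> x y /(congr1 val) /= /val_inj.
Qed.

Lemma card_V n k : k ^ n <= #|pell_vertex n k|.
Proof. by have := leq_card (@emb n k) (@emb_inj n k); rewrite card_tuple card_ord. Qed.

Lemma expn_ge k n : 2 <= k -> n.+1 <= k ^ n.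
Proof.
move=> Hk; elim: n => [|n IH] //; rewrite expnS.
apply: (@leq_trans (2 * n.+1)); first by lia.
by apply: leq_mul.
Qed.

Lemma kn_le k n : 2 <= k -> 1 <= n -> (k * n)./2 < #|pell_vertex n k|.
Proof.
move=> Hk Hn; apply: (leq_trans _ (card_V n k)).
case: n Hn => // n _; rewrite expnS.
have := expn_ge n Hk; have : 0 < k by lia.
move=> H0 H1; have := leq_mul (leqnn k) H1; lia.
Qed.

Lemma dist_le n k (u v : pell_vertex n k) m : walk_of_len u v m ->
  m < #|pell_vertex n k| -> pell_dist u v <= m.
Proof.
move=> W Hm; rewrite /pell_dist; case: leqP => // H.
have := before_find 0 H; rewrite nth_iota // add0n W //.
Qed.

Lemma dist_ge n k (u v : pell_vertex n k) : 1 <= k ->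
  RV u v <= 2 * pell_dist u v \/ pell_dist u v = #|pell_vertex n k|.
Proof.
move=> Hk; rewrite /pell_dist.
case: (boolP (has (walk_of_len u v) (iota 0 #|pell_vertex n k|))) => H.
  left; apply: RV_walk => //.
  have Hf := H; rewrite has_find size_iota in Hf.
  by have := nth_find 0 H; rewrite nth_iota ?add0n.
by right; rewrite hasNfind // size_iota.
Qed.

Lemma big_min_le (T : eqType) (r : seq T) (F : T -> nat) x c :
  c \in r -> \big[minn/x]_(i <- r) F i <= F c.
Proof.
elim: r => //= y r IH; rewrite in_cons big_cons => /orP [/eqP -> | H].
  exact: geq_minl.
exact: leq_trans (geq_minr _ _) (IH H).
Qed.

Theorem proposition4p1 (n k : nat) : 1 <= n -> 2 <= k ->
  pell_radius n k = (k * n)./2.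
Proof.
move=> Hn Hk.
have HV := kn_le Hk Hn.
have [c0 Hc0] : exists c0 : pell_vertex n k, lu c0 = nseq n k./2.
  apply: mkv; first by rewrite size_nseq.
    by apply: all_nseq_le; lia.
  by apply: pellb_nseq; apply/negP => /eqP; lia.
have Hup : pell_ecc c0 <= (k * n)./2.
  apply/bigmax_leqP => v _.
  have [c Hc R] := @up_main n k n Hk [::] (lu v) ltac:(by rewrite size_lu)
     is_true_true (pellb_lu v) is_true_true (all_lu v) ltac:(by rewrite size_lu).
  rewrite /= size_lu in R Hc.
  have [m' Hm' W] := R c0 v Hc0 erefl.
  apply: (leq_trans (dist_le W _)); lia.
have Hlo : forall u : pell_vertex n k, (k * n)./2 <= pell_ecc u.
  move=> u.
  have [S A P B] := @anti_props k (size (lu u)) Hk (lu u) (leqnn _).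
  have [v Hv] : exists v : pell_vertex n k, lu v = anti k (lu u).
    by apply: mkv => //; rewrite S size_lu.
  have HR : k * n <= RV u v + 1.
    rewrite /RV (eq_bigr (fun i : 'I_n => term k (nth 0 (lu u) i) (nth 0 (lu v) i))) //.
    rewrite (@sum_Rs k (lu u) (lu v) n) ?size_lu // Hv.
    by have := B (all_lu u); rewrite size_lu.
  rewrite /pell_ecc; apply: (@leq_trans (pell_dist u v)); last exact: (@leq_bigmax (pell_vertex n k) (@pell_dist n k u) v).
  case: (dist_ge u v (ltnW Hk)) => H; lia.
rewrite /pell_radius; apply/eqP; rewrite eqn_leq; apply/andP; split.
  apply: (leq_trans _ Hup); apply: big_min_le; exact: mem_index_enum.
apply: (big_ind (fun x => (k * n)./2 <= x)).
- exact: ltnW.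
- by move=> x y Hx Hy; rewrite leq_min Hx Hy.
- by move=> u _; apply: Hlo.
Qed.
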